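(* Let $\kappa$ be an infinite regular cardinal with $\kappa^{<\kappa}=\kappa$ and $\mathcal F$ a $(<\kappa)$-complete filter on $\kappa$. Then $\mathbb P(\mathcal F)$, with the orders $\langle\le_\zeta:\zeta<\kappa\rangle$, satisfies Mastering $\kappa$: for every dense $\mathcal D\subseteq\mathbb P(\mathcal F)$, every $p\in\mathbb P(\mathcal F)$ and every $\zeta<\kappa$ there are $q$ with $p\le_\zeta q$ and $\mathcal D'\subseteq\mathcal D$ with $|\mathcal D'|\le\kappa$ which is predense above $q$. Equivalently, whenever $p\Vdash$ ''$\dot\tau$ is an ordinal'' and $\zeta<\kappa$, there are $q\ge_\zeta p$ and a set of ordinals $X\in\mathbf V$ with $|X|\le\kappa$ such that $q\Vdash\dot\tau\in X$.
   Context: For a subtree $p\subseteq{}^{<\kappa}\kappa$ (nonempty, closed under initial segments), a node $t\in p$ is $\mathcal F$-splitting if $\{\alpha<\kappa: t^\frown\alpha\in p\}\in\mathcal F$. For $s\in p$, $\deg_p(s)=\{i<\mathrm{dom}(s):\exists t\in p\,(t\restriction i=s\restriction i\wedge t(i)\ne s(i))\}$. The forcing $\mathbb P(\mathcal F)$ consists of subtrees $p\subseteq{}^{<\kappa}\kappa$ such that: $\sup\{\mathrm{dom}(s):s\in p\}=\kappa$; every $s\in p$ has an $\mathcal F$-splitting extension $t\supseteq s$ in $p$; (o) for every $s\in p$, the set $\{\alpha:s^\frown\alpha\in p\}$ is either a singleton or belongs to $\mathcal F$; (a) if $\delta<\kappa$ is limit, $s\in{}^\delta\kappa$ and $s\restriction\alpha\in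 p$ for all $\alpha<\delta$, then $s\in p$; (b) for every $s\in p$, $\deg_p(s)$ is closed in $\mathrm{dom}(s)$ (every limit $\gamma<\mathrm{dom}(s)$ with $\deg_p(s)\cap\gamma$ unbounded in $\gamma$ belongs to $\deg_p(s)$). Order: $p\le q$ iff $p\supseteq q$. For $\zeta<\kappa$: $p\le_\zeta q$ iff $p\le q$ and every $s\in p$ with $\mathrm{otp}(\deg_p(s))<\zeta$ belongs to $q$. *)

(* Defs.v *)
(* The cardinal kappa is represented by a type K together with
   a strict well-order lt on K whose order type is kappa: elements of K are the
   ordinals < kappa. *)
From Stdlib Require Import Classical FunctionalExtensionality PropExtensionality.
Set Implicit Arguments.

Section Defs.
Variable K : Type.
Variable lt : K -> K -> Prop.

Definition strict_well_order : Prop :=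
  (forall a, ~ lt a a) /\
  (forall a b c, lt a b -> lt b c -> lt a c) /\
  (forall a b, lt a b \/ a = b \/ lt b a) /\
  well_founded lt.

Definition is_infinite_regular_cardinal : Prop :=
  strict_well_order /\
  inhabited K /\
  (* no largest element: the order type is a limit ordinal, hence infinite *)
  (forall a, exists b, lt a b) /\
  (* cardinal: no injection of kappa into a smaller ordinal *)
  (forall a, ~ exists f : K -> K,
       (forall x y, f x = f y -> x = y) /\ (forall x, lt (f x) a)) /\
  (* regular: every map from an ordinal < kappa into kappa is bounded *)
  (forall a (g : K -> K), exists c, forall b, lt b a -> lt (g b) c).

(** Elements of ^{<kappa}kappa: partial maps K -> option K whose domain is an
    ordinal < kappa. *)
Definition sq := K -> option K.

Definition seq_len (s : sq) (a : K) : Prop := forall b, s b <> None <-> lt b a.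

Definition is_seq (s : sq) : Prop := exists a, seq_len s a.

(** kappa^{<kappa} = kappa  (the inequality >= is trivial) *)
Definition kappa_lt_kappa_eq_kappa : Prop :=
  exists e : sq -> K, forall s t, is_seq s -> is_seq t -> e s = e t -> s = t.

Definition lt_kappa_complete_filter (F : (K -> Prop) -> Prop) : Prop :=
  F (fun _ => True) /\
  ~ F (fun _ => False) /\
  (forall X Y : K -> Prop, F X -> (forall x, X x -> Y x) -> F Y) /\
  (forall (a : K) (X : K -> K -> Prop),
      (forall b, lt b a -> F (X b)) -> F (fun x => forall b, lt b a -> X b x)).

Definition ext (s : sq) (x : K) (t : sq) : Prop :=
  exists a, seq_len s a /\ t a = Some x /\ forall b, b <> a -> t b = s b.

Definition restr (s : sq) (i : K) (t : sq) : Prop :=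
  forall b, (lt b i -> t b = s b) /\ (~ lt b i -> t b = None).

Definition extends (t s : sq) : Prop := forall b, s b <> None -> t b = s b.

Definition succ_set (p : sq -> Prop) (s : sq) : K -> Prop :=
  fun x => exists t, ext s x t /\ p t.

Definition F_splitting (F : (K -> Prop) -> Prop) (p : sq -> Prop) (t : sq) :=
  p t /\ F (succ_set p t).

Definition is_limit (d : K) : Prop :=
  (exists b, lt b d) /\ forall b, lt b d -> exists c, lt b c /\ lt c d.

Definition deg (p : sq -> Prop) (s : sq) : K -> Prop := fun i =>
  exists a, seq_len s a /\ lt i a /\
  exists t x, p t /\ (forall b, lt b i -> t b = s b) /\
              t i = Some x /\ s i <> Some x.

Definition closed_in (X : K -> Prop) (a : K) : Prop :=
  forall g, lt g a -> is_limit g ->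
    (forall b, lt b g -> exists c, X c /\ lt b c /\ lt c g) -> X g.

(* otp(X) < z : X is order isomorphic to some ordinal z' < z *)
Definition otp_lt (X : K -> Prop) (z : K) : Prop :=
  exists z', lt z' z /\ exists f : K -> K,
    (forall x y, X x -> X y -> lt x y -> lt (f x) (f y)) /\
    (forall x, X x -> lt (f x) z') /\
    (forall b, lt b z' -> exists x, X x /\ f x = b).

Definition in_P (F : (K -> Prop) -> Prop) (p : sq -> Prop) : Prop :=
  (forall s, p s -> is_seq s) /\
  (exists s, p s) /\
  (forall s i t, p s -> restr s i t -> p t) /\
  (* sup of lengths is kappa *)
  (forall a, exists s b, p s /\ seq_len s b /\ (a = b \/ lt a b)) /\
  (forall s, p s -> exists t, extends t s /\ F_splitting F p t) /\
  (forall s, p s ->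
     (exists x, forall y, succ_set p s y <-> y = x) \/ F (succ_set p s)) /\
  (forall d s, is_limit d -> seq_len s d ->
     (forall a t, lt a d -> restr s a t -> p t) -> p s) /\
  (forall s a, p s -> seq_len s a -> closed_in (deg p s) a).

(* p <= q  iff  p ⊇ q *)
Definition le (p q : sq -> Prop) : Prop := forall s, q s -> p s.

Definition le_z (z : K) (p q : sq -> Prop) : Prop :=
  le p q /\ forall s, p s -> otp_lt (deg p s) z -> q s.

Definition dense_in_P (F : (K -> Prop) -> Prop) (D : (sq -> Prop) -> Prop) :=
  (forall d, D d -> in_P F d) /\
  (forall p, in_P F p -> exists d, D d /\ le p d).

Definition predense_above (F : (K -> Prop) -> Prop)
    (D : (sq -> Prop) -> Prop) (q : sq -> Prop) : Prop :=
  forall r, in_P F r -> le q r ->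
    exists d u, D d /\ in_P F u /\ le r u /\ le d u.

Definition card_le_kappa (D : (sq -> Prop) -> Prop) : Prop :=
  exists f : (sq -> Prop) -> K, forall d1 d2, D d1 -> D d2 -> f d1 = f d2 -> d1 = d2.

End Defs.

(* Main.v *)
Require Import Defs.
From Stdlib Require Import Classical ClassicalEpsilon FunctionalExtensionality PropExtensionality.

Set Implicit Arguments.

Section Ord.
Variable K : Type.
Variable lt : K -> K -> Prop.
Hypothesis SWO : strict_well_order lt.

Lemma irr : forall a, ~ lt a a. Proof. apply SWO. Qed.
Lemma trans : forall a b c, lt a b -> lt b c -> lt a c. Proof. apply SWO. Qed.
Lemma tot : forall a b, lt a b \/ a = b \/ lt b a. Proof. apply SWO. Qed.
Lemma wf : well_founded lt. Proof. apply SWO. Qed.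

Lemma least_ex : forall P : K -> Prop, (exists x, P x) -> exists x, P x /\ forall y, P y -> ~ lt y x.
Proof.
  intros P [x Hx]. revert Hx. induction x as [x IH] using (well_founded_ind wf).
  intros Hx. destruct (classic (exists y, P y /\ lt y x)) as [[y [Hy Hyx]]|N].
  - apply (IH y Hyx Hy).
  - exists x. split; auto. intros y Hy Hl. apply N. eauto.
Qed.

Lemma lt_asym : forall a b, lt a b -> ~ lt b a.
Proof. intros a b H1 H2. apply (@irr a). eapply trans; eauto. Qed.

Lemma nlt_le : forall a b, ~ lt a b -> lt b a \/ b = a.
Proof. intros a b H. destruct (tot a b) as [|[|]]; auto; tauto. Qed.

Definition rs (s : sq K) (i : K) : sq K :=
  fun b => if excluded_middle_informative (lt b i) then s b else None.

Lemma rs_restr : forall s i, restr lt s i (rs s i).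
Proof. intros s i b. unfold rs. destruct (excluded_middle_informative (lt b i)); tauto. Qed.

Lemma restr_eq : forall s i t, restr lt s i t -> t = rs s i.
Proof.
  intros s i t H. apply functional_extensionality. intro b. unfold rs.
  destruct (H b) as [H1 H2]. destruct (excluded_middle_informative (lt b i)); auto.
Qed.

Lemma rs_app : forall s i b, lt b i -> rs s i b = s b.
Proof. intros. unfold rs. destruct (excluded_middle_informative (lt b i)); tauto. Qed.
Lemma rs_app2 : forall s i b, ~ lt b i -> rs s i b = None.
Proof. intros. unfold rs. destruct (excluded_middle_informative (lt b i)); tauto. Qed.

Lemma len_uniq : forall s a c, seq_len lt s a -> seq_len lt s c -> a = c.
Proof.
  intros s a c Ha Hc. destruct (tot a c) as [H|[H|H]]; auto.
  - exfalso. apply (@irr a). apply Ha. apply Hc. auto.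
  - exfalso. apply (@irr c). apply Hc. apply Ha. auto.
Qed.

Definition leK a b := lt a b \/ a = b.

Lemma leK_trans_lt : forall a b c, leK a b -> lt b c -> lt a c.
Proof. intros a b c [H|H] H2; subst; eauto using trans. Qed.
Lemma lt_trans_leK : forall a b c, lt a b -> leK b c -> lt a c.
Proof. intros a b c H [H2|H2]; subst; eauto using trans. Qed.

Lemma rs_len : forall s a i, seq_len lt s a -> leK i a -> seq_len lt (rs s i) i.
Proof.
  intros s a i Ha Hi b. unfold rs. destruct (excluded_middle_informative (lt b i)).
  - split; auto. intros _. apply Ha. eapply lt_trans_leK; eauto.
  - split; tauto.
Qed.

Lemma rs_full : forall s a i, seq_len lt s a -> leK a i -> rs s i = s.
Proof.
  intros s a i Ha Hi. apply functional_extensionality. intro b. unfold rs.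
  destruct (excluded_middle_informative (lt b i)); auto.
  destruct (s b) eqn:E; auto. exfalso. apply n.
  eapply lt_trans_leK. apply Ha. rewrite E; discriminate. auto.
Qed.

Definition agree (s t : sq K) : Prop := forall b v w, s b = Some v -> t b = Some w -> v = w.

Lemma agree_sym : forall s t, agree s t -> agree t s.
Proof. unfold agree. intros. symmetry; eauto. Qed.

Lemma ext_of_agree : forall s t a c, seq_len lt s a -> seq_len lt t c -> agree s t -> leK a c -> extends t s.
Proof.
  intros s t a c Ha Hc Hag Hle b Hb.
  assert (t b <> None). { apply Hc. eapply lt_trans_leK. apply Ha; auto. auto. }
  destruct (s b) eqn:E1; [|congruence]. destruct (t b) eqn:E2; [|congruence].
  f_equal. symmetry. eapply Hag; eauto.
Qed.

Lemma extends_agree : forall t s, extends t s -> agree s t.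
Proof. intros t s H b v w H1 H2. rewrite H in H2 by congruence. congruence. Qed.

Lemma extends_len : forall t s a c, extends t s -> seq_len lt s a -> seq_len lt t c -> leK a c.
Proof.
  intros t s a c H Ha Hc. destruct (tot a c) as [|[|]]; [left|right|]; auto.
  exfalso. assert (s c <> None) by (apply Ha; auto).
  apply (@irr c). apply Hc. rewrite H; auto.
Qed.

Lemma extends_rs : forall t s a, extends t s -> seq_len lt s a -> s = rs t a.
Proof.
  intros t s a H Ha. apply functional_extensionality. intro b. unfold rs.
  destruct (excluded_middle_informative (lt b a)).
  - symmetry. apply H. apply Ha; auto.
  - destruct (s b) eqn:E; auto. exfalso. apply n. apply Ha. congruence.
Qed.

Lemma rs_extends : forall s i, extends s (rs s i).
Proof. intros s i b H. unfold rs in *. destruct (excluded_middle_informative (lt b i)); congruence. Qed.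

Lemma extends_trans : forall a b c : sq K, extends a b -> extends b c -> extends a c.
Proof. intros a b c H1 H2 x Hx. rewrite H1; auto. rewrite H2; auto. Qed.

Lemma extends_refl : forall a : sq K, extends a a.
Proof. intros a x _; auto. Qed.

Lemma agree_cases : forall s t a c, seq_len lt s a -> seq_len lt t c -> agree s t ->
  (extends t s /\ leK a c) \/ (extends s t /\ leK c a).
Proof.
  intros s t a c Ha Hc Hag. destruct (tot a c) as [H|[H|H]].
  - left. split. eapply ext_of_agree; eauto; left; auto. left; auto.
  - left. split. eapply ext_of_agree; eauto; right; auto. right; auto.
  - right. split. eapply ext_of_agree; eauto. apply agree_sym; auto. left; auto. left; auto.
Qed.

Lemma rs_rs : forall s i j, leK i j -> rs (rs s j) i = rs s i.
Proof.
  intros s i j H. apply functional_extensionality. intro b. unfold rs.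
  destruct (excluded_middle_informative (lt b i)); destruct (excluded_middle_informative (lt b j)); auto.
  exfalso. apply n. eapply lt_trans_leK; eauto.
Qed.

Lemma extends_eq : forall s t a, extends t s -> seq_len lt s a -> seq_len lt t a -> t = s.
Proof.
  intros s t a H Ha Hc. rewrite (extends_rs H Ha). symmetry. eapply rs_full; eauto. right; auto.
Qed.

End Ord.
Arguments trans {K lt} SWO {a b c}.
Arguments nlt_le {K lt} SWO {a b}.
Arguments lt_asym {K lt} SWO {a b}.
Arguments leK_trans_lt {K lt} SWO {a b c}.
Arguments lt_trans_leK {K lt} SWO {a b c}.
Arguments irr {K lt} SWO a.
Arguments tot {K lt} SWO a b.

Set Implicit Arguments.

Section Trees.
Variable K : Type.
Variable lt : K -> K -> Prop.
Hypothesis SWO : strict_well_order lt.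
Hypothesis UNB : forall a, exists b, lt a b.
Variable F : (K -> Prop) -> Prop.
Hypothesis HF : lt_kappa_complete_filter lt F.

Lemma F_nonempty : forall X, F X -> exists x, X x.
Proof.
  intros X H. destruct (classic (exists x, X x)); auto. exfalso.
  destruct HF as [_ [H2 [H3 _]]]. apply H2. apply (H3 X); auto. intros x Hx. apply H0. eauto.
Qed.

Lemma F_up : forall X Y : K -> Prop, F X -> (forall x, X x -> Y x) -> F Y.
Proof. apply HF. Qed.

Section T.
Variable T : sq K -> Prop.
Hypothesis HT : in_P lt F T.

Lemma T_seq : forall s, T s -> is_seq lt s. Proof. apply HT. Qed.
Lemma T_restr : forall s i t, T s -> restr lt s i t -> T t. Proof. apply HT. Qed.
Lemma T_rs : forall s i, T s -> T (rs lt s i). Proof. intros. eapply T_restr; eauto. apply rs_restr. Qed.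
Lemma T_long : forall a, exists s b, T s /\ seq_len lt s b /\ (a = b \/ lt a b). Proof. apply HT. Qed.
Lemma T_split : forall s, T s -> exists t, extends t s /\ F_splitting lt F T t. Proof. apply HT. Qed.
Lemma T_o : forall s, T s ->
     (exists x, forall y, succ_set lt T s y <-> y = x) \/ F (succ_set lt T s). Proof. apply HT. Qed.
Lemma T_lim : forall d s, is_limit lt d -> seq_len lt s d ->
     (forall a t, lt a d -> restr lt s a t -> T t) -> T s. Proof. apply HT. Qed.
Lemma T_closed : forall s a, T s -> seq_len lt s a -> closed_in lt (deg lt T s) a. Proof. apply HT. Qed.

Lemma T_succ : forall s, T s -> exists x t, ext lt s x t /\ T t.
Proof.
  intros s Hs. destruct (T_o Hs) as [[x Hx]|H].
  - destruct (proj2 (Hx x) eq_refl) as [t [H1 H2]]. eauto.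
  - destruct (F_nonempty H) as [x [t [H1 H2]]]. eauto.
Qed.
End T.

Lemma classify : forall a, (forall b, ~ lt b a) \/ (exists b, lt b a /\ forall c, lt b c -> ~ lt c a) \/ is_limit lt a.
Proof.
  intro a. destruct (classic (exists b, lt b a)) as [[b0 Hb0]|N].
  - destruct (classic (exists b, lt b a /\ forall c, lt b c -> ~ lt c a)) as [H|N2]; auto.
    right; right. split; eauto. intros b Hb. apply NNPP. intro N3. apply N2. exists b. split; auto.
    intros c H1 H2. apply N3; eauto.
  - left. intros b Hb. eauto.
Qed.

Lemma pred_cases : forall b a i, lt b a -> (forall c, lt b c -> ~ lt c a) -> lt i a -> lt i b \/ i = b.
Proof.
  intros b a i H1 H2 H3. destruct (tot SWO i b) as [|[|]]; auto. exfalso. eapply H2; eauto.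
Qed.

Lemma ext_len : forall s x t a a', ext lt s x t -> seq_len lt s a -> lt a a' -> (forall c, lt a c -> ~ lt c a') ->
  seq_len lt t a'.
Proof.
  intros s x t a a' [a0 [H1 [H2 H3]]] Ha H4 H5. pose proof (len_uniq SWO H1 Ha). subst a0.
  intro b. destruct (classic (b = a)) as [E|E].
  - subst. rewrite H2. split; auto; discriminate.
  - rewrite H3 by auto. rewrite (Ha b). split; intro.
    + eapply trans; eauto.
    + destruct (pred_cases H4 H5 H) ; tauto.
Qed.

Section LB.
Variable T : sq K -> Prop.
Hypothesis HT : in_P lt F T.
Variable x : sq K.
Variable lx : K.
Hypothesis Hx : T x.
Hypothesis Hlx : seq_len lt x lx.

Definition L (y : sq K) : Prop := T y /\ agree y x /\
  forall i v, y i = Some v -> x i = None -> forall t w, T t -> (forall b, lt b i -> t b = y b) -> t i = Some w -> ~ lt w v.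

Lemma L_chain : forall y1 y2, L y1 -> L y2 -> agree y1 y2.
Proof.
  intros y1 y2 [T1 [A1 M1]] [T2 [A2 M2]].
  destruct (T_seq HT _ T1) as [l1 Hl1]. destruct (T_seq HT _ T2) as [l2 Hl2].
  apply NNPP. intro N.
  assert (exists i, exists v w, y1 i = Some v /\ y2 i = Some w /\ v <> w) as Ex.
  { apply NNPP. intro N2. apply N. intros i v w H1 H2. apply NNPP. intro. apply N2. exists i, v, w; auto. }
  destruct (least_ex SWO _ Ex) as [i [[v [w [H1 [H2 H3]]]] Hmin]].
  assert (Hbelow : forall b, lt b i -> y2 b = y1 b).
  { intros b Hb. assert (y1 b <> None). { apply Hl1. eapply (trans SWO Hb). apply Hl1. congruence. }
    assert (y2 b <> None). { apply Hl2. eapply (trans SWO Hb). apply Hl2. congruence. }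
    destruct (y1 b) as [v1|] eqn:E1; [|congruence]. destruct (y2 b) as [v2|] eqn:E2; [|congruence].
    destruct (classic (v1 = v2)); [congruence|]. exfalso. eapply Hmin; [|eauto]. eauto. }
  destruct (x i) as [xi|] eqn:Exi.
  - apply H3. transitivity xi. eapply A1; eauto. symmetry; eapply A2; eauto.
  - assert (~ lt w v) by exact (M1 i v H1 Exi y2 w T2 Hbelow H2).
    assert (~ lt v w). { refine (M2 i w H2 Exi y1 v T1 _ H1). intros b Hb. symmetry; auto. }
    destruct (tot SWO v w) as [|[|]]; tauto.
Qed.

Lemma L_len : forall a, exists y, L y /\ seq_len lt y a.
Proof.
  intro a. induction a as [a IH] using (well_founded_ind (wf SWO)).
  destruct (classic (lt lx a)) as [Hlt|Hnlt].
  2:{ exists (rs lt x a). split.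
      - split. apply T_rs; auto. split.
        + apply extends_agree. apply rs_extends.
        + intros i v H1 H2. exfalso. unfold rs in H1. destruct (excluded_middle_informative (lt i a)); congruence.
      - eapply rs_len; eauto. destruct (nlt_le SWO Hnlt); [left|right]; auto. }
  destruct (classify a) as [Z|[[b [Hb Hbs]]|Hlim]].
  - exfalso. eapply Z; eauto.
  - destruct (IH b Hb) as [y [[Ty [Ay My]] Hy]].
    assert (Hlxb : leK lt lx b).
    { destruct (classic (lt b lx)) as [H|H]. exfalso. eapply Hbs; eauto.
      destruct (nlt_le SWO H); [left|right]; auto. }
    destruct (T_succ HT _ Ty) as [x0 [t0 [E0 T0]]].
    set (S := fun w => exists t, T t /\ (forall c, lt c b -> t c = y c) /\ t b = Some w).
    assert (HS : exists w, S w).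
    { exists x0, t0. split; auto. destruct E0 as [a0 [Ha0 [Hb0 Hc0]]]. rewrite (len_uniq SWO Ha0 Hy) in *.
      split; auto. intros c Hc. apply Hc0. intro; subst; eapply irr; eauto. }
    destruct (least_ex SWO _ HS) as [v [[t1 [T1 [A1 B1]]] Mv]].
    destruct (T_seq HT _ T1) as [l1 Hl1].
    assert (Hal1 : leK lt a l1).
    { assert (lt b l1) by (apply Hl1; congruence).
      destruct (classic (lt l1 a)). exfalso; eapply Hbs; eauto. destruct (nlt_le SWO H0); [left|right]; auto. }
    exists (rs lt t1 a). split; [|eapply rs_len; eauto].
    split; [apply T_rs; auto|]. split.
    + intros c v1 w1 H1 H2. assert (lt c lx) by (apply Hlx; congruence).
      assert (lt c b) by (eapply lt_trans_leK; eauto).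
      rewrite rs_app in H1 by (eapply trans; eauto). rewrite A1 in H1 by auto. eapply Ay; eauto.
    + intros i v' H1 H2 t w Tt Hb' Ht.
      assert (lt i a). { destruct (classic (lt i a)); auto. rewrite rs_app2 in H1 by auto. congruence. }
      rewrite rs_app in H1 by auto.
      destruct (pred_cases Hb Hbs H) as [Hib|Hib].
      * rewrite A1 in H1 by auto. eapply My; eauto. intros c Hc.
        rewrite Hb' by auto. rewrite rs_app by (apply (trans SWO Hc); apply (trans SWO Hib); exact Hb). apply A1. exact (trans SWO Hc Hib).
      * subst i. rewrite B1 in H1. injection H1; intro; subst v'. apply Mv. exists t. split; auto. split; auto.
        intros c Hc. rewrite Hb' by auto. rewrite rs_app by (eapply trans; eauto). auto.
  -
    set (P := fun b (y : sq K) => L y /\ (exists c, lt c a /\ seq_len lt y c) /\ y b <> None).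
    set (u := fun b => match excluded_middle_informative (exists y, P b y) with
                       | left H => proj1_sig (constructive_indefinite_description _ H) b
                       | right _ => None end).
    assert (Hu : forall b y, P b y -> u b = y b).
    { intros b y Hy. unfold u. destruct (excluded_middle_informative (exists y, P b y)) as [H|H]; [|exfalso; eauto].
      destruct (constructive_indefinite_description _ H) as [y' Hy']. simpl.
      destruct Hy as [L1 [_ N1]]. destruct Hy' as [L2 [_ N2]].
      destruct (y b) as [v|] eqn:E1; [|congruence]. destruct (y' b) as [w|] eqn:E2; [|congruence].
      f_equal. apply (L_chain L2 L1 b); auto. }
    assert (Hu0 : forall b, ~ lt b a -> u b = None).
    { intros b Hb. unfold u. destruct (excluded_middle_informative (exists y, P b y)) as [H|]; auto.
      exfalso. destruct H as [y [_ [[c [Hc Hyc]] N]]]. apply Hb. apply (trans SWO (proj1 (Hyc b) N) Hc). }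
    assert (Hlen : seq_len lt u a).
    { intro b. split.
      - intro H. destruct (classic (lt b a)); auto. exfalso; auto.
      - intro H. destruct (proj2 Hlim b H) as [c [H1 H2]]. destruct (IH c H2) as [y [Ly Hy]].
        rewrite (@Hu b y). apply Hy; auto. split; auto. split. eauto. apply Hy; auto. }
    assert (Hrs : forall c y, lt c a -> L y -> seq_len lt y c -> rs lt u c = y).
    { intros c y Hc Ly Hy. apply functional_extensionality. intro b. unfold rs at 1.
      destruct (excluded_middle_informative (lt b c)).
      - apply Hu. split; auto. split. eauto. apply Hy; auto.
      - symmetry. destruct (y b) eqn:E; auto. exfalso. apply n. apply Hy. congruence. }
    exists u. split; auto. split; [|split].
    + eapply T_lim; eauto. intros c t Hc Ht. rewrite (restr_eq Ht).
      destruct (IH c Hc) as [y [Ly Hy]]. rewrite (Hrs c y Hc Ly Hy). apply Ly.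
    + intros b v w H1 H2. assert (lt b a) by (apply Hlen; congruence).
      destruct (proj2 Hlim b H) as [c [Hc1 Hc2]]. destruct (IH c Hc2) as [y [Ly Hy]].
      rewrite (@Hu b y) in H1. eapply (proj1 (proj2 Ly)); eauto. split; auto. split; eauto. apply Hy; auto.
    + intros i v H1 H2 t w Tt Hb Ht. assert (lt i a) by (apply Hlen; congruence).
      destruct (proj2 Hlim i H) as [c [Hc1 Hc2]]. destruct (IH c Hc2) as [y [Ly Hy]].
      assert (Py : P i y) by (split; auto; split; eauto; apply Hy; auto).
      rewrite (Hu i y Py) in H1. eapply (proj2 (proj2 Ly)); eauto.
      intros b Hb'. rewrite Hb by auto. apply Hu. split; auto. split; eauto. apply Hy. eapply trans; eauto.
Qed.

Lemma LB : forall a, leK lt lx a -> exists y, T y /\ extends y x /\ seq_len lt y a.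
Proof.
  intros a Ha. destruct (L_len a) as [y [[Ty [Ay _]] Hy]]. exists y. split; auto. split; auto.
  eapply ext_of_agree; eauto. apply agree_sym; auto.
Qed.

End LB.
End Trees.

Set Implicit Arguments.

Section Sub.
Variable K : Type.
Variable lt : K -> K -> Prop.
Hypothesis SWO : strict_well_order lt.
Hypothesis UNB : forall a, exists b, lt a b.
Variable F : (K -> Prop) -> Prop.
Hypothesis HF : lt_kappa_complete_filter lt F.

Lemma succ_ex : forall a, exists s, lt a s /\ forall c, lt a c -> ~ lt c s.
Proof.
  intro a. destruct (least_ex SWO (fun c => lt a c) (UNB a)) as [s [H1 H2]]. eauto.
Qed.

Lemma agree_sub : forall x y t : sq K, agree x y -> extends y t -> agree x t.
Proof. intros x y t H1 H2 b v w E1 E2. rewrite <- H2 in E2 by congruence. eauto. Qed.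

Lemma ext_extends : forall t v t', ext lt t v t' -> extends t' t.
Proof.
  intros t v t' [a [Ha [H1 H2]]] b Hb. apply H2. intro; subst. apply Hb.
  destruct (t a) eqn:E; auto. exfalso. apply (irr SWO a). apply Ha. congruence.
Qed.

Lemma deg_mono : forall (T1 T2 : sq K -> Prop) y i, (forall s, T1 s -> T2 s) -> deg lt T1 y i -> deg lt T2 y i.
Proof.
  intros T1 T2 y i H Hd. unfold deg in *. cbv beta in *. destruct Hd as [a [Ha [Hi [t [x [Tt Ht]]]]]]. exists a. split; [|split]; auto. exists t, x. split; [apply H; auto | exact Ht].
Qed.

Lemma closed_ext : forall (X Y : K -> Prop) a, (forall i, X i <-> Y i) -> closed_in lt X a -> closed_in lt Y a.
Proof.
  intros X Y a H C g Hg Hl Hc. apply H. apply C; auto. intros b Hb. destruct (Hc b Hb) as [c [H1 H2]].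
  exists c. split; auto. apply H; auto.
Qed.

Definition sub (T : sq K -> Prop) (x : sq K) : sq K -> Prop := fun y => T y /\ agree x y.

Lemma agree_refl : forall x : sq K, agree x x.
Proof. intros x b v w H1 H2. congruence. Qed.

Lemma sub_P : forall T x, in_P lt F T -> T x -> in_P lt F (sub T x).
Proof.
  intros T x HT Tx. destruct (T_seq HT _ Tx) as [lx Hlx].
  assert (Hup : forall y, T y -> extends y x -> sub T x y).
  { intros y Ty Hy. split; auto. apply extends_agree; auto. }
  assert (Hsucc : forall y, extends y x -> forall v, succ_set lt T y v -> succ_set lt (sub T x) y v).
  { intros y Hy v [t' [E Tt]]. exists t'. split; [exact E|]. apply Hup; auto.
    eapply extends_trans. apply (ext_extends E). auto. }
  assert (Hspl : forall y, T y -> extends y x -> exists t, extends t y /\ F_splitting lt F (sub T x) t).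
  { intros y Ty Hy. destruct (T_split HT _ Ty) as [t [Ht [Tt Ft]]]. exists t. split; auto. split.
    apply Hup; auto. eapply extends_trans; eauto. eapply F_up; eauto. apply Hsucc. eapply extends_trans; eauto. }
  split; [|split; [|split; [|split; [|split; [|split; [|split]]]]]].
  - intros s [Ts _]. apply (T_seq HT _ Ts).
  - exists x. split; auto. apply agree_refl.
  - intros s i t [Ts As] Hr. split. eapply T_restr; eauto. eapply agree_sub; eauto.
    rewrite (restr_eq Hr). apply rs_extends.
  - intro a. destruct (classic (lt a lx)) as [H|H].
    + exists x, lx. split. split; auto. apply agree_refl. split; auto.
    + assert (Hle : leK lt lx a) by (destruct (nlt_le SWO H); [left|right]; auto).
      destruct (LB SWO HF HT Tx Hlx Hle) as [y [Ty [Ey Hy]]].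
      exists y, a. split; auto.
  - intros s [Ts As]. destruct (T_seq HT _ Ts) as [ls Hls].
    destruct (agree_cases SWO Hlx Hls As) as [[E _]|[E _]].
    + apply Hspl; auto.
    + destruct (Hspl x Tx (extends_refl x)) as [t [H1 H2]]. exists t. split; auto. eapply extends_trans; eauto.
  - intros s [Ts As]. destruct (T_seq HT _ Ts) as [ls Hls].
    destruct (classic (extends s x)) as [E|NE].
    + destruct (T_o HT _ Ts) as [[v Hv]|H].
      * left. exists v. intro y. rewrite <- Hv. split; auto.
        intros [t' [Et Tt]]. exists t'. split; auto. apply Tt.
      * right. eapply F_up; eauto.
    + destruct (agree_cases SWO Hlx Hls As) as [[E _]|[E Hle]]; [contradiction|].
      assert (Hlt : lt ls lx).
      { destruct Hle; auto. subst. exfalso. apply NE. rewrite (extends_eq SWO E Hls Hlx). apply extends_refl. }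
      destruct (x ls) as [v0|] eqn:Ev0.
      2:{ exfalso. apply (Hlx ls); auto. }
      left. exists v0. intro w. split.
      * intros [t' [Et [Tt At]]]. destruct Et as [a0 [Ha0 [H1 H2]]]. rewrite (len_uniq SWO Ha0 Hls) in H1.
        symmetry. eapply At; eauto.
      * intro; subst w. destruct (succ_ex ls) as [sl [Hs1 Hs2]].
        exists (rs lt x sl). split.
        -- exists ls. split; auto. split. rewrite rs_app; auto.
           intros b Hb. destruct (tot SWO b ls) as [H|[H|H]]; [|contradiction|].
           ++ rewrite rs_app by (eapply trans; eauto). apply E. apply Hls; auto.
           ++ rewrite rs_app2 by (apply Hs2; auto). destruct (s b) eqn:Es; auto. exfalso. apply (irr SWO b).
              refine (trans SWO (proj1 (Hls b) _) H). congruence.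
        -- split. apply (T_rs HT); auto. apply agree_sym. apply extends_agree. apply rs_extends.
  - intros d s Hd Hs Hr. split.
    + eapply T_lim; eauto. intros a t Ha Hat. apply (Hr a t Ha Hat).
    + intros b v w H1 H2. assert (lt b d) by (apply Hs; congruence).
      destruct (proj2 Hd b H) as [c [Hc1 Hc2]].
      destruct (Hr c (rs lt s c) Hc2 (rs_restr _ _ _)) as [_ A]. eapply A; eauto. rewrite rs_app; auto.
  - intros s a [Ts As] Hsa g Hg Hlim Hcof.
    assert (Hsub : forall i, deg lt (sub T x) s i -> deg lt T s i).
    { intros i. apply deg_mono. intros y [Ty _]; auto. }
    assert (Hg' : deg lt T s g).
    { apply (T_closed HT Ts Hsa); auto. intros b Hb. destruct (Hcof b Hb) as [c [H1 H2]]. exists c. split; auto. }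
    destruct (proj1 Hlim) as [b0 Hb0]. destruct (Hcof b0 Hb0) as [c [Hc [Hc1 Hc2]]].
    assert (Hlxc : ~ lt c lx).
    { intro Hcl. destruct Hc as [a1 [Ha1 [Hca1 [t' [v' [[Tt' At'] [Hb' [Ht' Hne]]]]]]]].
      destruct (x c) as [xc|] eqn:Exc. 2:{ apply (Hlx c); auto. }
      destruct (s c) as [sc|] eqn:Esc. 2:{ apply (Ha1 c); auto. }
      apply Hne. f_equal. transitivity xc. symmetry; eapply As; eauto. eapply At'; eauto. }
    destruct Hg' as [a2 [Ha2 [Hga2 [t [v [Tt [Hb [Ht Hne]]]]]]]].
    exists a2. split; auto. split; auto. exists t, v. split; [split; auto|]; auto.
    intros b v1 w1 E1 E2. assert (lt b lx) by (apply Hlx; congruence).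
    assert (lt b g). { destruct (nlt_le SWO Hlxc) as [H3|H3]. apply (trans SWO H (trans SWO H3 Hc2)). subst; apply (trans SWO H Hc2). }
    rewrite Hb in E2 by auto. eapply As; eauto.
Qed.

End Sub.

Set Implicit Arguments.

Section Star.
Variable K : Type.
Variable lt : K -> K -> Prop.
Hypothesis SWO : strict_well_order lt.
Hypothesis UNB : forall a, exists b, lt a b.
Hypothesis REG : forall a (g : K -> K), exists c, forall b, lt b a -> lt (g b) c.
Variable F : (K -> Prop) -> Prop.
Hypothesis HF : lt_kappa_complete_filter lt F.
Variable p : sq K -> Prop.
Hypothesis Hp : in_P lt F p.
Variable z : K.

Definition Bset (s : sq K) : Prop :=
  p s /\ exists s', p s' /\ extends s' s /\ otp_lt lt (deg lt p s') z.

Lemma deg_transfer : forall (T : sq K -> Prop) y1 y2 a1 a2 i, seq_len lt y1 a1 -> seq_len lt y2 a2 -> agree y1 y2 ->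
  lt i a2 -> deg lt T y1 i -> deg lt T y2 i.
Proof.
  intros T y1 y2 a1 a2 i H1 H2 A Hi [a [Ha [Hia [t [v [Tt [Hb [Ht Hne]]]]]]]].
  pose proof (len_uniq SWO Ha H1); subst a.
  exists a2. split; auto. split; auto. exists t, v. split; auto.
  assert (Hy : forall b, lt b i -> y2 b = y1 b).
  { intros b Hb'. assert (y1 b <> None) by (apply H1; apply (trans SWO Hb' Hia)).
    assert (y2 b <> None) by (apply H2; apply (trans SWO Hb' Hi)).
    destruct (y1 b) eqn:E1; [|congruence]. destruct (y2 b) eqn:E2; [|congruence]. f_equal. symmetry. eapply A; eauto. }
  split. intros b Hb'. rewrite Hy; auto. split; auto.
  assert (y1 i <> None) by (apply H1; auto). assert (y2 i <> None) by (apply H2; auto).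
  destruct (y1 i) eqn:E1; [|congruence]. destruct (y2 i) eqn:E2; [|congruence].
  intro E. injection E; intro; subst. apply Hne. f_equal. eapply A; eauto.
Qed.

Definition Mono (N : K -> Prop) (b : K) : Prop :=
  exists m : K -> K, (forall u v, N u -> N v -> lt u v -> lt (m u) (m v)) /\ (forall u, N u -> lt (m u) b).

Lemma star : forall r, in_P lt F r -> (forall y, r y -> Bset y) ->
  exists k, r k /\ forall t1 t2, p t1 -> p t2 -> extends t1 k -> extends t2 k -> agree t1 t2.
Proof.
  intros r Hr HB. apply NNPP. intro N.
  assert (H : forall k, r k -> exists t1 t2, p t1 /\ p t2 /\ extends t1 k /\ extends t2 k /\ ~ agree t1 t2).
  { intros k Hk. apply NNPP. intro N2. apply N. exists k. split; auto. intros t1 t2 H1 H2 H3 H4.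
    apply NNPP. intro N3. apply N2. exists t1, t2. tauto. }
  clear N.
  destruct Hr as [Hr1 [[x0 Hx0] Hr2]].
  assert (HrP : in_P lt F r) by (split; [auto|split; [eauto|auto]]).
  destruct (Hr1 x0 Hx0) as [l0 Hl0].
  set (Lr := L lt r x0).
  assert (Lnode : forall a, exists y, Lr y /\ seq_len lt y a) by (apply (L_len SWO HF HrP Hx0 Hl0)).
  assert (Lr_r : forall y, Lr y -> r y) by (intros y [Hy _]; auto).
  assert (Lext : forall y1 y2 a1 a2, Lr y1 -> Lr y2 -> seq_len lt y1 a1 -> seq_len lt y2 a2 -> leK lt a1 a2 -> extends y2 y1).
  { intros y1 y2 a1 a2 L1 L2 H1 H2 Hle. eapply ext_of_agree; eauto. apply (L_chain SWO HrP L1 L2). }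
  set (DL := fun i => exists y, Lr y /\ deg lt p y i).
  assert (Unb : forall c, exists i, DL i /\ lt c i).
  { intro c. destruct (succ_ex SWO UNB c) as [c1 [Hc1 Hc1']].
    destruct (Lnode c1) as [k [Lk Hk]].
    destruct (H k (Lr_r k Lk)) as [t1 [t2 [P1 [P2 [E1 [E2 NA]]]]]].
    assert (exists j v1 v2, t1 j = Some v1 /\ t2 j = Some v2 /\ v1 <> v2) as [j [v1 [v2 [J1 [J2 J3]]]]].
    { apply NNPP. intro N. apply NA. intros j v1 v2 J1 J2. apply NNPP. intro. apply N. exists j, v1, v2. auto. }
    destruct (succ_ex SWO UNB j) as [j1 [Hj1 Hj1']].
    destruct (Lnode j1) as [y [Ly Hy]].
    set (Q1 := fun m => lt m j1 /\ exists v, ((t1 m = Some v) \/ (t2 m = Some v)) /\ y m <> Some v).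
    assert (HQ : exists m, Q1 m).
    { exists j. unfold Q1. split; auto. destruct (y j) as [yj|] eqn:Ey. 2:{ exfalso. apply (Hy j); auto. }
      destruct (classic (yj = v1)).
      - subst. exists v2. split; [right; auto|]. intro E. injection E; intro; auto.
      - exists v1. split; [left; auto|]. intro E. injection E; intro; auto. }
    assert (Hjc : lt c1 j1).
    { destruct (classic (lt j c1)) as [Hjc|Hjc].
      - exfalso. assert (k j <> None) by (apply Hk; auto). apply J3.
        rewrite E1 in J1 by auto. rewrite E2 in J2 by auto. congruence.
      - destruct (nlt_le SWO Hjc) as [H1|H1]. apply (trans SWO H1 Hj1). subst; auto. }
    destruct (least_ex SWO Q1 HQ) as [m [[Hm1 [v [Hv1 Hv2]]] Hmin]].
    assert (Hkm : ~ lt m c1).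
    { intro Hmc. assert (k m <> None) by (apply Hk; auto).
      assert (Eyk : extends y k) by (apply (Lext k y c1 j1 Lk Ly Hk Hy); left; auto).
      destruct Hv1 as [Hv1|Hv1].
      - apply Hv2. rewrite Eyk by auto. rewrite <- E1 by auto. auto.
      - apply Hv2. rewrite Eyk by auto. rewrite <- E2 by auto. auto. }
    exists m. split.
    2:{ destruct (nlt_le SWO Hkm) as [Hl|Hl]. apply (trans SWO Hc1 Hl). subst; auto. }
    exists y. split; auto. exists j1. split; auto. split; auto.
    destruct Hp as [Ps _].
    assert (G : forall t, (t = t1 \/ t = t2) -> t m = Some v -> forall b, lt b m -> t b = y b).
    { intros t Ht Htm b Hb.
      assert (Pt : p t) by (destruct Ht; subst; auto).
      destruct (Ps t Pt) as [lt0 Hlt0].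
      assert (lt b lt0) by (apply (trans SWO Hb); apply Hlt0; congruence).
      assert (lt b j1) by (apply (trans SWO Hb Hm1)).
      assert (t b <> None) by (apply Hlt0; auto). assert (y b <> None) by (apply Hy; auto).
      destruct (t b) as [tb|] eqn:Et; [|congruence]. destruct (y b) as [yb|] eqn:Eyb; [|congruence].
      destruct (classic (tb = yb)); [congruence|]. exfalso. apply (Hmin b); auto.
      unfold Q1. split; auto. exists tb. split. 2:{ rewrite Eyb. intro E; injection E; auto. }
      destruct Ht; subst; [left|right]; auto. }
    destruct Hv1 as [Hv1|Hv1].
    - exists t1, v. split; [auto|]. split; [apply G; auto|]. split; auto.
    - exists t2, v. split; [auto|]. split; [apply G; auto|]. split; auto. }
  set (NN := fun x i => DL i /\ lt i x).
  assert (Bnd : forall x, DL x -> exists b, lt b z /\ Mono (NN x) b).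
  { intros x Hx. destruct (succ_ex SWO UNB x) as [x1 [Hx1 _]].
    destruct (Lnode x1) as [y [Ly Hy]].
    destruct (HB y (Lr_r y Ly)) as [_ [s' [Ps' [Es' [z' [Hz' [f [Hf1 [Hf2 _]]]]]]]]].
    destruct Hp as [Ps _]. destruct (Ps s' Ps') as [ls' Hls'].
    assert (Hsub : forall i, NN x i -> deg lt p s' i).
    { intros i [[yi [Lyi Hdi]] Hix].
      assert (Hdy : deg lt p y i).
      { destruct Hdi as [ai [Hai Hrest]].
        eapply (deg_transfer (T:=p) Hai Hy); eauto. apply (L_chain SWO HrP Lyi Ly). apply (trans SWO Hix Hx1).
        exists ai; auto. }
      destruct Hdy as [ay [Hay [Hiay Hrest]]]. pose proof (len_uniq SWO Hay Hy); subst ay.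
      eapply (deg_transfer (T:=p) Hy Hls'). apply extends_agree; auto.
      apply (lt_trans_leK SWO Hiay). apply (extends_len SWO Es' Hy Hls'). exists x1; auto. }
    exists z'. split; auto. exists f. split.
    - intros u v Hu Hv Huv. apply Hf1; auto.
    - intros u Hu. apply Hf2; auto. }
  set (LM := fun x b => Mono (NN x) b /\ forall b', Mono (NN x) b' -> ~ lt b' b).
  assert (LMex : forall x, DL x -> exists b, LM x b /\ lt b z).
  { intros x Hx. destruct (Bnd x Hx) as [b0 [Hb0 Mb0]].
    destruct (least_ex SWO (Mono (NN x)) (ex_intro _ b0 Mb0)) as [b [Mb Hmin]].
    exists b. split. split; auto. destruct (nlt_le SWO (Hmin b0 Mb0)) as [H1|H1].
    apply (trans SWO H1 Hb0). subst; auto. }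
  assert (LMmono : forall x1 x2 b1 b2, DL x1 -> DL x2 -> lt x1 x2 -> LM x1 b1 -> LM x2 b2 -> lt b1 b2).
  { intros x1 x2 b1 b2 D1 D2 H12 [M1 Min1] [[m [Hm1 Hm2]] Min2].
    assert (Mono (NN x1) (m x1)).
    { exists m. split.
      - intros u v [Du Hu] [Dv Hv] Huv. apply Hm1; [split; [auto| exact (trans SWO Hu H12)] | split; [auto| exact (trans SWO Hv H12)] | auto].
      - intros u [Du Hu]. apply Hm1; auto. split; auto. apply (trans SWO Hu H12). split; auto. }
    assert (lt (m x1) b2) by (apply Hm2; split; auto).
    destruct (nlt_le SWO (Min1 _ H0)) as [H3|H3]. apply (trans SWO H3 H1). subst; auto. }
  set (g := fun b => match excluded_middle_informative (exists x, DL x /\ LM x b) with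
                     | left Hx => proj1_sig (constructive_indefinite_description _ Hx)
                     | right _ => b end).
  destruct (REG z g) as [c Hc].
  destruct (Unb c) as [x [Dx Hcx]].
  destruct (LMex x Dx) as [b [LMb Hbz]].
  assert (Hg : g b = x).
  { unfold g. destruct (excluded_middle_informative (exists x, DL x /\ LM x b)) as [E|E].
    2:{ exfalso. apply E. eauto. }
    destruct (constructive_indefinite_description _ E) as [x' [Dx' LMx']]. simpl.
    destruct (tot SWO x' x) as [H1|[H1|H1]]; auto.
    - exfalso. apply (irr SWO b). exact (LMmono x' x b b Dx' Dx H1 LMx' LMb).
    - exfalso. apply (irr SWO b). exact (LMmono x x' b b Dx Dx' H1 LMb LMx'). }
  pose proof (Hc b Hbz). rewrite Hg in H0. apply (irr SWO x). apply (trans SWO H0 Hcx).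
Qed.

End Star.

Set Implicit Arguments.

Section Main.
Variable K : Type.
Variable lt : K -> K -> Prop.
Hypothesis SWO : strict_well_order lt.
Hypothesis UNB : forall a, exists b, lt a b.
Hypothesis REG : forall a (g : K -> K), exists c, forall b, lt b a -> lt (g b) c.
Variable F : (K -> Prop) -> Prop.
Hypothesis HF : lt_kappa_complete_filter lt F.
Variable D : (sq K -> Prop) -> Prop.
Hypothesis HD : dense_in_P lt F D.
Variable p : sq K -> Prop.
Hypothesis Hp : in_P lt F p.
Variable z : K.

Definition B := Bset lt p z.
Definition Fr (t : sq K) : Prop := p t /\ ~ B t /\ forall u, is_seq lt u -> extends t u -> u <> t -> B u.
Definition Wset (w : sq K) : Prop := p w /\ exists t a, Fr t /\ ext lt t a w.
Definition ch (w : sq K) : sq K -> Prop :=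
  match excluded_middle_informative (in_P lt F (sub p w)) with
  | left H => proj1_sig (constructive_indefinite_description _ (proj2 HD _ H))
  | right _ => fun _ => False end.
Definition q (s : sq K) : Prop := B s \/ Fr s \/ exists w, Wset w /\ ch w s.

Lemma ch_spec : forall w, in_P lt F (sub p w) -> D (ch w) /\ le (sub p w) (ch w).
Proof.
  intros w H. unfold ch. destruct (excluded_middle_informative (in_P lt F (sub p w))) as [H'|H']; [|contradiction].
  destruct (constructive_indefinite_description _ _) as [d Hd]. simpl. auto.
Qed.

Lemma ch_sub : forall w s, ch w s -> sub p w s.
Proof.
  intros w s. unfold ch. destruct (excluded_middle_informative (in_P lt F (sub p w))) as [H'|H']; [|contradiction].
  destruct (constructive_indefinite_description _ _) as [d [Hd1 Hd2]]. simpl. apply Hd2.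
Qed.

Lemma subP : forall w, p w -> in_P lt F (sub p w).
Proof. intros. apply (sub_P SWO UNB HF); auto. Qed.

Lemma ch_P : forall w, p w -> in_P lt F (ch w).
Proof. intros w Hw. destruct (ch_spec (subP Hw)) as [H _]. apply (proj1 HD); auto. Qed.

Lemma p_seq : forall s, p s -> is_seq lt s. Proof. apply Hp. Qed.

Lemma proper_lt : forall t u lu l0, extends t u -> seq_len lt u lu -> seq_len lt t l0 -> u <> t -> lt lu l0.
Proof.
  intros t u lu l0 E Hu Ht N. destruct (extends_len SWO E Hu Ht) as [H|H]; auto. subst.
  exfalso. apply N. symmetry. exact (extends_eq SWO E Hu Ht).
Qed.

Lemma Bdown : forall y s, B y -> extends y s -> is_seq lt s -> B s.
Proof.
  intros y s [Py [s' [Ps' [E O]]]] Ey [ls Hls]. split.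
  - rewrite (extends_rs Ey Hls). apply (T_rs Hp); auto.
  - exists s'. split; auto. split; auto. eapply extends_trans; eauto.
Qed.

Lemma Fr_init : forall t u, Fr t -> extends t u -> is_seq lt u -> B u \/ u = t.
Proof. intros t u [_ [_ H]] E S. destruct (classic (u = t)); auto. Qed.

Lemma BorFr : forall y, p y -> (forall u, is_seq lt u -> extends y u -> u <> y -> B u) -> B y \/ Fr y.
Proof. intros y Py H. destruct (classic (B y)); auto. right. split; auto. Qed.

Lemma Fr_eq : forall t1 t2, Fr t1 -> Fr t2 -> agree t1 t2 -> t1 = t2.
Proof.
  intros t1 t2 F1 F2 A. destruct (p_seq (proj1 F1)) as [l1 H1]. destruct (p_seq (proj1 F2)) as [l2 H2].
  destruct (agree_cases SWO H1 H2 A) as [[E _]|[E _]].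
  - destruct (Fr_init F2 E (ex_intro _ l1 H1)) as [Hb|Hb]; [exfalso; exact (proj1 (proj2 F1) Hb)|auto].
  - destruct (Fr_init F1 E (ex_intro _ l2 H2)) as [Hb|Hb]; [exfalso; exact (proj1 (proj2 F2) Hb)|auto].
Qed.

Lemma BF_le_Fr : forall s t0, (B s \/ Fr s) -> Fr t0 -> agree s t0 -> extends t0 s.
Proof.
  intros s t0 Hs F0 A.
  assert (Ps : p s) by (destruct Hs as [[H _]|[H _]]; auto).
  destruct (p_seq Ps) as [ls Hls]. destruct (p_seq (proj1 F0)) as [l0 Hl0].
  destruct (agree_cases SWO Hls Hl0 A) as [[E _]|[E _]]; auto.
  destruct (classic (t0 = s)) as [Eq|Ne]. subst; apply extends_refl.
  exfalso. apply (proj1 (proj2 F0)). destruct Hs as [Hs|Hs].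
  - eapply Bdown; eauto. exists l0; auto.
  - apply (proj2 (proj2 Hs)); auto. exists l0; auto.
Qed.

Lemma Fr_below : forall y, p y -> ~ B y -> exists t, Fr t /\ extends y t.
Proof.
  intros y Py NB. destruct (p_seq Py) as [ly Hly].
  destruct (least_ex SWO (fun l => ~ B (rs lt y l) /\ leK lt l ly)) as [l0 [[H1 H2] Hmin]].
  { exists ly. rewrite (rs_full SWO Hly (or_intror eq_refl)). split; auto. right; auto. }
  exists (rs lt y l0). split; [|apply rs_extends].
  split. apply (T_rs Hp); auto. split; auto.
  intros u [lu Hlu] Eu Nu.
  assert (Hl0 : seq_len lt (rs lt y l0) l0) by (apply (rs_len SWO Hly H2)).
  assert (lt lu l0) by (apply (proper_lt Eu Hlu Hl0 Nu)).
  rewrite (extends_rs Eu Hlu). rewrite rs_rs by (unfold leK; auto).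
  apply NNPP. intro N. apply (Hmin lu); auto. split; auto. left. apply (lt_trans_leK SWO H H2).
Qed.

Lemma succ_below : forall l0 l1 i, lt l0 l1 -> (forall c, lt l0 c -> ~ lt c l1) -> lt i l1 -> leK lt i l0.
Proof. intros. destruct (pred_cases SWO l0 l1 i) as [H2|H2]; auto; [left|right]; auto. Qed.

Lemma succ_above : forall l0 l1 c, lt l0 l1 -> (forall c, lt l0 c -> ~ lt c l1) -> lt l0 c -> leK lt l1 c.
Proof. intros l0 l1 c H1 H2 H3. destruct (nlt_le SWO (H2 c H3)) as [H|H]; [left|right]; auto. Qed.

Lemma mk_ext : forall y ly t l0 l1, seq_len lt y ly -> seq_len lt t l0 -> extends y t -> lt l0 ly ->
  lt l0 l1 -> (forall c, lt l0 c -> ~ lt c l1) ->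
  exists v, ext lt t v (rs lt y l1) /\ seq_len lt (rs lt y l1) l1.
Proof.
  intros y ly t l0 l1 Hy Ht E H01 S1 S2.
  destruct (y l0) as [v|] eqn:Ev. 2:{ exfalso. apply (Hy l0); auto. }
  exists v. split.
  - exists l0. split; auto. split. rewrite rs_app; auto.
    intros b Hb. destruct (tot SWO b l0) as [H|[H|H]]; [|contradiction|].
    + rewrite rs_app by (apply (trans SWO H S1)). apply E. apply Ht; auto.
    + rewrite rs_app2 by (apply S2; auto). destruct (t b) eqn:Etb; auto. exfalso. apply (irr SWO b).
      refine (trans SWO (proj1 (Ht b) _) H). congruence.
  - apply (rs_len SWO Hy). apply (succ_above S1 S2 H01).
Qed.

Lemma ext_info : forall t a w l0 l1, ext lt t a w -> seq_len lt t l0 -> lt l0 l1 -> (forall c, lt l0 c -> ~ lt c l1) ->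
  seq_len lt w l1 /\ extends w t /\ w l0 = Some a.
Proof.
  intros t a w l0 l1 E H0 S1 S2. split. apply (ext_len SWO l1 E H0 S1 S2). split. apply (ext_extends SWO E).
  destruct E as [a0 [Ha0 [Hw _]]]. rewrite (len_uniq SWO H0 Ha0). auto.
Qed.

Lemma W_nonBF : forall w, Wset w -> ~ B w /\ ~ Fr w.
Proof.
  intros w [Pw [t [a [Ft E]]]]. pose proof (ext_extends SWO E) as Ewt.
  assert (St : is_seq lt t) by (apply p_seq; exact (proj1 Ft)).
  assert (tw : t <> w).
  { intro; subst. destruct E as [a0 [Ha0 [Hw _]]]. apply (irr SWO a0). apply (Ha0 a0). congruence. }
  split.
  - intro Bw. apply (proj1 (proj2 Ft)). eapply Bdown; eauto.
  - intro Fw. apply (proj1 (proj2 Ft)). apply (proj2 (proj2 Fw)); auto.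
Qed.

Lemma nonBF_up : forall y y', ~ B y -> ~ Fr y -> is_seq lt y -> p y' -> extends y' y -> ~ B y' /\ ~ Fr y'.
Proof.
  intros y y' NB NF Sy Py' E. split.
  - intro Bv. apply NB. eapply Bdown; eauto.
  - intro Fv. destruct (Fr_init Fv E Sy) as [H|H]. auto. subst; auto.
Qed.

Lemma K2 : forall y w1 w2, Wset w1 -> Wset w2 -> extends y w1 -> extends y w2 -> w1 = w2.
Proof.
  intros y w1 w2 [P1 [t1 [a1 [F1 E1]]]] [P2 [t2 [a2 [F2 E2]]]] H1 H2.
  assert (t1 = t2).
  { apply Fr_eq; auto. intros b v w X1 X2.
    assert (Y1 : y b = Some v) by (rewrite H1 by (rewrite (ext_extends SWO E1) by congruence; congruence); rewrite (ext_extends SWO E1) by congruence; auto).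
    assert (Y2 : y b = Some w) by (rewrite H2 by (rewrite (ext_extends SWO E2) by congruence; congruence); rewrite (ext_extends SWO E2) by congruence; auto).
    congruence. }
  subst t2. destruct (p_seq (proj1 F1)) as [l0 Hl0]. destruct (succ_ex SWO UNB l0) as [l1 [S1 S2]].
  destruct (ext_info E1 Hl0 S1 S2) as [L1 _]. destruct (ext_info E2 Hl0 S1 S2) as [L2 _].
  rewrite (extends_rs H1 L1). rewrite (extends_rs H2 L2). auto.
Qed.

Lemma K1 : forall y, q y -> ~ B y -> ~ Fr y -> exists w, Wset w /\ ch w y /\ extends y w.
Proof.
  intros y Qy NB NF. destruct Qy as [H|[H|[w [Ww Cw]]]]; try contradiction.
  exists w. split; auto. split; auto.
  destruct (ch_sub _ _ Cw) as [Py Ay].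
  destruct Ww as [Pw [t [a [Ft E]]]].
  destruct (p_seq Py) as [ly Hly]. destruct (p_seq (proj1 Ft)) as [l0 Hl0].
  destruct (succ_ex SWO UNB l0) as [l1 [S1 S2]].
  destruct (ext_info E Hl0 S1 S2) as [Lw [Ewt Ew]].
  destruct (agree_cases SWO Lw Hly Ay) as [[X _]|[X Hle]]; auto.
  destruct Hle as [Hlt|Heq].
  - exfalso. assert (leK lt ly l0) by (apply (succ_below S1 S2 Hlt)).
    assert (Ety : extends t y).
    { intros b Hb. assert (lt b ly) by (apply Hly; auto). assert (lt b l0) by (apply (lt_trans_leK SWO H0 H)).
      rewrite <- Ewt by (apply Hl0; auto). apply X; auto. }
    destruct (Fr_init Ft Ety (ex_intro _ ly Hly)) as [H1|H1]; auto. subst; auto.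
  - subst. rewrite (extends_eq SWO X Hly Lw). apply extends_refl.
Qed.

Lemma K3 : forall y y' w, q y' -> extends y' y -> ~ B y -> ~ Fr y -> is_seq lt y -> Wset w -> extends y w -> ch w y'.
Proof.
  intros y y' w Qy' E NB NF Sy Ww Eyw.
  assert (Py' : p y').
  { destruct Qy' as [[H _]|[[H _]|[w' [Ww' Cw']]]]; auto. apply (ch_sub _ _ Cw'). }
  destruct (nonBF_up NB NF Sy Py' E) as [NB' NF'].
  destruct (K1 Qy' NB' NF') as [w' [Ww' [C' E']]].
  rewrite (K2 Ww Ww' (extends_trans E Eyw) E'). auto.
Qed.

Lemma q_p : forall s, q s -> p s.
Proof. intros s [[H _]|[[H _]|[w [_ C]]]]; auto. apply (ch_sub _ _ C). Qed.

Lemma rs_seq : forall s i, is_seq lt s -> is_seq lt (rs lt s i).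
Proof.
  intros s i [ls Hls]. destruct (classic (lt i ls)) as [H|H].
  - exists i. apply (rs_len SWO Hls). left; auto.
  - rewrite (rs_full SWO Hls). exists ls; auto. destruct (nlt_le SWO H); [left|right]; auto.
Qed.

Lemma W_ch : forall w, Wset w -> ch w w.
Proof.
  intros w Ww. assert (Pw : p w) by apply Ww. pose proof (ch_P Pw) as HC.
  destruct (p_seq Pw) as [lw Hlw].
  destruct (T_long HC lw) as [y [b [Cy [Hb Hab]]]].
  destruct (ch_sub _ _ Cy) as [_ A].
  assert (E : extends y w) by (eapply ext_of_agree; eauto; destruct Hab; [right|left]; auto).
  pose proof (extends_rs E Hlw) as Hw. rewrite Hw at 2. apply (T_rs HC); auto.
Qed.

Lemma init_below_ext : forall t a w l0 u, ext lt t a w -> seq_len lt t l0 -> extends w u -> is_seq lt u -> u <> w -> extends t u.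
Proof.
  intros t a w l0 u E Hl0 Ewu [lu Hlu] N.
  destruct (succ_ex SWO UNB l0) as [l1 [S1 S2]].
  destruct (ext_info E Hl0 S1 S2) as [Lw [Ewt _]].
  assert (lt lu l1) by (apply (proper_lt Ewu Hlu Lw N)).
  assert (leK lt lu l0) by (apply (succ_below S1 S2 H)).
  intros b Hb. assert (lt b lu) by (apply Hlu; auto). assert (lt b l0) by (apply (lt_trans_leK SWO H1 H0)).
  rewrite <- Ewt by (apply Hl0; auto). apply Ewu; auto.
Qed.

Lemma B_succ : forall t a w, B t -> p w -> ext lt t a w -> B w \/ Fr w.
Proof.
  intros t a w Bt Pw E. apply BorFr; auto. intros u Su Eu Nu.
  destruct (p_seq (proj1 Bt)) as [l0 Hl0].
  eapply Bdown; eauto. eapply init_below_ext; eauto.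
Qed.

Lemma Fr_succ_W : forall t a w, Fr t -> p w -> ext lt t a w -> Wset w.
Proof. intros t a w Ft Pw E. split; auto. exists t, a; auto. Qed.

Lemma succ_BF : forall s, B s \/ Fr s -> forall v, succ_set lt p s v -> succ_set lt q s v.
Proof.
  intros s Hs v [w [E Pw]]. exists w. split; auto. destruct Hs as [Bs|Fs].
  - destruct (B_succ Bs Pw E) as [H|H]; [left|right;left]; auto.
  - right; right. exists w. split. eapply Fr_succ_W; eauto. apply W_ch. eapply Fr_succ_W; eauto.
Qed.

Lemma succ_mono : forall (T1 T2 : sq K -> Prop) s v, (forall y, T1 y -> T2 y) -> succ_set lt T1 s v -> succ_set lt T2 s v.
Proof. intros T1 T2 s v H [t [E Tt]]. exists t. auto. Qed.

Lemma q_long : forall a, exists s b, q s /\ seq_len lt s b /\ (a = b \/ lt a b).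
Proof.
  intro a. destruct (T_long Hp a) as [y [b [Py [Hb Hab]]]].
  destruct (classic (B y)) as [By|NB].
  - exists y, b. split; [left|]; auto.
  - destruct (Fr_below Py NB) as [t [Ft Eyt]].
    destruct (classic (y = t)) as [Eq|Ne].
    + subst. exists t, b. split; [right;left|]; auto.
    + destruct (p_seq (proj1 Ft)) as [l0 Hl0].
      assert (lt l0 b) by (apply (proper_lt Eyt Hl0 Hb); auto).
      destruct (succ_ex SWO UNB l0) as [l1 [S1 S2]].
      destruct (mk_ext Hb Hl0 Eyt H S1 S2) as [v [E Lw]].
      assert (Ww : Wset (rs lt y l1)). { eapply Fr_succ_W; eauto. apply (T_rs Hp); auto. }
      destruct (T_long (ch_P (proj1 Ww)) a) as [y' [b' [C' [H1 H2]]]].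
      exists y', b'. split; auto. right; right. eauto.
Qed.

Lemma q_restr : forall s i t, q s -> restr lt s i t -> q t.
Proof.
  intros s i t Qs R. rewrite (restr_eq R).
  assert (Ss : is_seq lt s) by (apply p_seq; apply q_p; auto).
  destruct Qs as [Bs|[Fs|[w [Ww C]]]].
  - left. eapply Bdown; eauto. apply rs_extends. apply rs_seq; auto.
  - destruct (Fr_init Fs (rs_extends lt s i) (rs_seq i Ss)) as [H|H]. left; auto. rewrite H. right; left; auto.
  - right; right. exists w. split; auto. apply (T_rs (ch_P (proj1 Ww))); auto.
Qed.

Lemma q_split : forall s, q s -> exists t, extends t s /\ F_splitting lt F q t.
Proof.
  intros s Qs.
  destruct (classic (exists w, Wset w /\ ch w s)) as [[w [Ww C]]|NW].
  - destruct (T_split (ch_P (proj1 Ww)) s C) as [t [E [Ct Ft]]].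
    exists t. split; auto. split. right; right; eauto.
    eapply F_up; eauto. intros v. apply succ_mono. intros y Hy. right; right; eauto.
  - assert (BF : B s \/ Fr s) by (destruct Qs as [H|[H|H]]; auto; contradiction).
    destruct (T_split Hp s (q_p Qs)) as [t [E [Pt Ft]]].
    destruct (classic (B t)) as [Bt|NBt].
    + exists t. split; auto. split. left; auto. eapply F_up; eauto. apply succ_BF; auto.
    + destruct (Fr_below Pt NBt) as [t0 [F0 E0]].
      assert (Es0 : extends t0 s).
      { apply BF_le_Fr; auto. intros b v w H1 H2. rewrite <- E0 in H2 by congruence. rewrite E in H2 by congruence. congruence. }
      destruct (classic (t = t0)) as [Eq|Ne].
      * subst. exists t0. split; auto. split. right; left; auto. eapply F_up; eauto. apply succ_BF; auto.
      * destruct (p_seq Pt) as [lt0 Hlt0]. destruct (p_seq (proj1 F0)) as [l0 Hl0].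
        assert (lt l0 lt0) by (apply (proper_lt E0 Hl0 Hlt0); auto).
        destruct (succ_ex SWO UNB l0) as [l1 [S1 S2]].
        destruct (mk_ext Hlt0 Hl0 E0 H S1 S2) as [v [Ev Lw]].
        assert (Ww : Wset (rs lt t l1)). { eapply Fr_succ_W; eauto. apply (T_rs Hp); auto. }
        pose proof (W_ch Ww) as Cw.
        destruct (T_split (ch_P (proj1 Ww)) _ Cw) as [t' [E' [Ct' Ft']]].
        exists t'. split.
        -- eapply extends_trans; eauto. eapply extends_trans. apply (ext_extends SWO Ev). auto.
        -- split. right; right; eauto. eapply F_up; eauto. intros u. apply succ_mono. intros y Hy. right; right; eauto.
Qed.

Lemma succ_eq_o : forall (T1 T2 : sq K -> Prop) s, (forall v, succ_set lt T1 s v <-> succ_set lt T2 s v) ->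
  ((exists x, forall y, succ_set lt T1 s y <-> y = x) \/ F (succ_set lt T1 s)) ->
  ((exists x, forall y, succ_set lt T2 s y <-> y = x) \/ F (succ_set lt T2 s)).
Proof.
  intros T1 T2 s H. assert (succ_set lt T1 s = succ_set lt T2 s).
  { apply functional_extensionality. intro v. apply propositional_extensionality. auto. }
  rewrite H0. auto.
Qed.

Lemma q_o : forall s, q s -> (exists x, forall y, succ_set lt q s y <-> y = x) \/ F (succ_set lt q s).
Proof.
  intros s Qs.
  destruct (classic (B s \/ Fr s)) as [BF|NBF].
  - apply (succ_eq_o (T1 := p)). intro v. split. apply succ_BF; auto. apply succ_mono. apply q_p.
    apply (T_o Hp). apply q_p; auto.
  - assert (NB : ~ B s) by tauto. assert (NF : ~ Fr s) by tauto.
    destruct (K1 Qs NB NF) as [w [Ww [C E]]].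
    apply (succ_eq_o (T1 := ch w)).
    + intro v. split.
      * apply succ_mono. intros y Hy. right; right; eauto.
      * intros [t [Et Qt]]. exists t. split; auto. eapply K3; eauto. apply (ext_extends SWO Et).
        apply p_seq; apply q_p; auto.
    + apply (T_o (ch_P (proj1 Ww))); auto.
Qed.

Lemma q_lim : forall d s, is_limit lt d -> seq_len lt s d -> (forall a t, lt a d -> restr lt s a t -> q t) -> q s.
Proof.
  intros d s Hd Hs Hr.
  assert (Ps : p s). { apply (T_lim Hp Hd Hs). intros a t Ha Ht. apply q_p. eauto. }
  destruct (classic (B s \/ Fr s)) as [BF|NBF].
  { destruct BF; [left|right;left]; auto. }
  assert (NB : ~ B s) by tauto. assert (NF : ~ Fr s) by tauto.
  assert (Hc : exists c, lt c d /\ ~ B (rs lt s c)).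
  { apply NNPP. intro N. destruct (BorFr Ps) as [H|H]; try tauto.
    intros u [lu Hlu] Eu Nu. assert (lt lu d) by (apply (proper_lt Eu Hlu Hs Nu)).
    rewrite (extends_rs Eu Hlu). apply NNPP. intro N2. apply N. eauto. }
  destruct Hc as [c [Hcd NBc]].
  destruct (proj2 Hd c Hcd) as [c' [Hcc' Hc'd]].
  set (y := rs lt s c').
  assert (Ly : seq_len lt y c') by (apply (rs_len SWO Hs); left; auto).
  assert (Lc : seq_len lt (rs lt s c) c) by (apply (rs_len SWO Hs); left; auto).
  assert (Eyc : extends y (rs lt s c)).
  { unfold y. rewrite <- (rs_rs SWO s (j := c') (i := c)) by (left; auto). apply rs_extends. }
  assert (Qy : q y) by (apply (Hr c'); auto; apply rs_restr).
  assert (NBy : ~ B y). { intro By. apply NBc. eapply Bdown; eauto. exists c; auto. }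
  assert (NFy : ~ Fr y).
  { intro Fy. destruct (Fr_init Fy Eyc (ex_intro _ c Lc)) as [H|H]; auto.
    rewrite H in Lc. apply (irr SWO c). rewrite (len_uniq SWO Lc Ly) at 2. auto. }
  destruct (K1 Qy NBy NFy) as [w [Ww [Cy Eyw]]].
  right; right. exists w. split; auto.
  apply (T_lim (ch_P (proj1 Ww)) Hd Hs). intros e t He Ht. rewrite (restr_eq Ht).
  destruct (classic (lt c' e)) as [H|H].
  - refine (K3 (y:=y) _ _ NBy NFy (ex_intro _ c' Ly) Ww Eyw).
    + apply (Hr e); auto. apply rs_restr.
    + unfold y. rewrite <- (rs_rs SWO s (j := e) (i := c')) by (left; auto). apply rs_extends.
  - assert (rs lt s e = rs lt y e).
    { unfold y. rewrite rs_rs; auto. destruct (nlt_le SWO H); [left|right]; auto. }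
    rewrite H0. apply (T_rs (ch_P (proj1 Ww))); auto.
Qed.

Lemma q_closed : forall s a, q s -> seq_len lt s a -> closed_in lt (deg lt q s) a.
Proof.
  intros s a Qs Hsa. assert (Ps : p s) by (apply q_p; auto).
  destruct (classic (B s \/ Fr s)) as [BF|NBF].
  - apply (closed_ext (X := deg lt p s)). 2:{ apply (T_closed Hp Ps Hsa). }
    intro i. split.
    2:{ apply deg_mono. apply q_p. }
    intros [a0 [Ha0 [Hia [t [v [Pt [Hb [Ht Hne]]]]]]]].
    pose proof (len_uniq SWO Ha0 Hsa); subst a0.
    destruct (p_seq Pt) as [lt0 Hlt0].
    assert (lt i lt0) by (apply Hlt0; congruence).
    destruct (succ_ex SWO UNB i) as [i1 [S1 S2]].
    assert (L1 : seq_len lt (rs lt t i1) i1) by (apply (rs_len SWO Hlt0); apply (succ_above S1 S2 H)).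
    exists a. split; auto. split; auto. exists (rs lt t i1), v. split; [|split; [|split]]; auto.
    + assert (BFt : B (rs lt t i1) \/ Fr (rs lt t i1)).
      { apply BorFr. apply (T_rs Hp); auto.
      intros u [lu Hlu] Eu Nu.
      assert (lt lu i1) by (apply (proper_lt Eu Hlu L1 Nu)).
      assert (leK lt lu i) by (apply (succ_below S1 S2 H0)).
      assert (Esu : extends s u).
      { intros b Hbu. assert (lt b lu) by (apply Hlu; auto). assert (lt b i) by (apply (lt_trans_leK SWO H2 H1)).
        rewrite <- Hb by auto. rewrite <- Eu by auto. rewrite rs_app; auto. apply (trans SWO H3 S1). }
      assert (Nus : u <> s).
      { intro; subst u. pose proof (len_uniq SWO Hlu Hsa); subst lu. apply (irr SWO a). apply (leK_trans_lt SWO H1 Hia). }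
      destruct BF as [Bs|Fs]. eapply Bdown; eauto. exists lu; auto. apply (proj2 (proj2 Fs)); auto. exists lu; auto. }
      destruct BFt; [left|right;left]; auto.
    + intros b Hb'. rewrite rs_app by (apply (trans SWO Hb' S1)). auto.
    + rewrite rs_app; auto.
  - assert (NB : ~ B s) by tauto. assert (NF : ~ Fr s) by tauto.
    destruct (K1 Qs NB NF) as [w [Ww [Cs Esw]]].
    assert (Ww' := Ww). destruct Ww' as [Pw [t0 [a0 [F0 E0]]]].
    destruct (p_seq (proj1 F0)) as [l0 Hl0].
    destruct (succ_ex SWO UNB l0) as [l1 [S1 S2]].
    destruct (ext_info E0 Hl0 S1 S2) as [Lw [Ewt0 Ew0]].
    assert (Est0 : extends s t0) by (eapply extends_trans; eauto).
    destruct (W_nonBF Ww) as [NBw NFw].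
    intros g Hg Hlim Hcof.
    destruct (classic (lt l0 g)) as [Hlg|Hlg].
    + assert (Hc : forall b, lt b g -> exists c, deg lt (ch w) s c /\ lt b c /\ lt c g).
      { intros b Hbg.
        assert (exists b', lt b' g /\ leK lt b b' /\ leK lt l0 b') as [b' [H1 [H2 H3]]].
        { destruct (tot SWO b l0) as [X|[X|X]].
          - exists l0. split; auto. split; [left|right]; auto.
          - subst. exists l0. split; auto. split; right; auto.
          - exists b. split; auto. split; [right|left]; auto. }
        destruct (Hcof b' H1) as [c [[ac [Hac [Hcac [t [v [Qt [Htb [Htc Hne]]]]]]]] [Hbc Hcg]]].
        exists c. split; [|split; auto].
        * exists ac. split; auto. split; auto. exists t, v. split; auto.
          assert (lt l0 c) by (apply (leK_trans_lt SWO H3 Hbc)).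
          assert (leK lt l1 c) by (apply (succ_above S1 S2 H)).
          refine (K3 (y:=w) Qt _ NBw NFw (ex_intro _ l1 Lw) Ww (extends_refl w)).
          intros x Hx. assert (lt x l1) by (apply Lw; auto). assert (lt x c) by (apply (lt_trans_leK SWO H4 H0)).
          rewrite Htb by auto. apply Esw; auto.
        * apply (leK_trans_lt SWO H2 Hbc). }
      apply (deg_mono q (T1 := ch w)). intros y Hy. right; right; eauto.
      apply (T_closed (ch_P Pw) Cs Hsa); auto.
    + assert (Hgl0 : leK lt g l0) by (destruct (nlt_le SWO Hlg); [left|right]; auto).
      assert (Dg : deg lt p s g).
      { apply (T_closed Hp Ps Hsa); auto. intros b Hb. destruct (Hcof b Hb) as [c [H1 H2]]. exists c. split; auto.
        apply (deg_mono p (T1:=q)); auto. apply q_p. }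
      destruct Dg as [a1 [Ha1 [Hga1 [t [v [Pt [Htb [Htg Hne]]]]]]]].
      destruct (p_seq Pt) as [lt1 Hlt1].
      assert (lt g lt1) by (apply Hlt1; congruence).
      destruct (succ_ex SWO UNB g) as [g1 [T1 T2]].
      assert (L1 : seq_len lt (rs lt t g1) g1) by (apply (rs_len SWO Hlt1); apply (succ_above T1 T2 H)).
      assert (Qt' : q (rs lt t g1)).
      { destruct Hgl0 as [Hgl|Hgl].
        - assert (BFt : B (rs lt t g1) \/ Fr (rs lt t g1)).
          { apply BorFr. apply (T_rs Hp); auto.
            intros u [lu Hlu] Eu Nu.
            assert (lt lu g1) by (apply (proper_lt Eu Hlu L1 Nu)).
            assert (leK lt lu g) by (apply (succ_below T1 T2 H0)).
            assert (Et0u : extends t0 u).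
            { intros b Hbu. assert (lt b lu) by (apply Hlu; auto). assert (lt b g) by (apply (lt_trans_leK SWO H2 H1)).
              assert (lt b l0) by (apply (trans SWO H3 Hgl)).
              rewrite <- Eu by auto. rewrite rs_app by (apply (trans SWO H3 T1)). rewrite Htb by auto.
              symmetry. apply Est0. apply Hl0; auto. }
            assert (Nut : u <> t0).
            { intro; subst u. pose proof (len_uniq SWO Hlu Hl0); subst lu. apply (irr SWO l0). apply (leK_trans_lt SWO H1 Hgl). }
            apply (proj2 (proj2 F0)); auto. exists lu; auto. }
          destruct BFt; [left|right;left]; auto.
        - subst g.
          assert (Ett0 : extends t t0).
          { intros b Hb0. assert (lt b l0) by (apply Hl0; auto). rewrite Htb by auto. apply Est0; auto. }
          destruct (mk_ext Hlt1 Hl0 Ett0 H T1 T2) as [v' [E' _]].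
          right; right. exists (rs lt t g1). split. eapply Fr_succ_W; eauto. apply (T_rs Hp); auto.
          apply W_ch. eapply Fr_succ_W; eauto. apply (T_rs Hp); auto. }
      exists a. split; auto. split; auto.
      exists (rs lt t g1), v. split; [auto|split; [|split]].
      * intros b Hb'. rewrite rs_app by (apply (trans SWO Hb' T1)). auto.
      * rewrite rs_app; auto.
      * auto.
Qed.

Lemma q_in_P : in_P lt F q.
Proof.
  split; [|split; [|split; [|split; [|split; [|split; [|split]]]]]].
  - intros s Qs. apply p_seq. apply q_p; auto.
  - destruct (q_long z) as [s [b [Qs _]]]. eauto.
  - apply q_restr.
  - apply q_long.
  - apply q_split.
  - apply q_o.
  - apply q_lim.
  - apply q_closed.
Qed.

Lemma main_result : forall (e : sq K -> K) (k0 : K),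
  (forall s t, is_seq lt s -> is_seq lt t -> e s = e t -> s = t) ->
  exists q0, in_P lt F q0 /\ le_z lt z p q0 /\
    exists D' : (sq K -> Prop) -> Prop, (forall d, D' d -> D d) /\ card_le_kappa D' /\
               predense_above lt F D' q0.
Proof.
  intros e k0 He. exists q. split; [apply q_in_P|]. split.
  { split. intros s Qs. apply q_p; auto.
    intros s Ps O. left. split; auto. exists s. split; auto. split; auto. apply extends_refl. }
  exists (fun d => exists w, p w /\ d = ch w). split; [|split].
  - intros d [w [Pw Ed]]. subst. apply (ch_spec (subP Pw)).
  - set (f := fun d => match excluded_middle_informative (exists w, p w /\ d = ch w) with
                       | left H => e (proj1_sig (constructive_indefinite_description _ H))
                       | right _ => k0 end).
    exists f. intros d1 d2 H1 H2 Hf. unfold f in Hf.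
    destruct (excluded_middle_informative (exists w, p w /\ d1 = ch w)) as [X1|X1]; [|contradiction].
    destruct (excluded_middle_informative (exists w, p w /\ d2 = ch w)) as [X2|X2]; [|contradiction].
    destruct (constructive_indefinite_description _ X1) as [w1 [P1 E1]].
    destruct (constructive_indefinite_description _ X2) as [w2 [P2 E2]]. simpl in Hf.
    rewrite (He w1 w2 (p_seq P1) (p_seq P2) Hf) in E1. congruence.
  - intros r Hr Hqr.
    destruct (classic (exists y, r y /\ ~ B y /\ ~ Fr y)) as [[y [Ry [NB NF]]]|Hall].
    + destruct (K1 (Hqr y Ry) NB NF) as [w [Ww [Cy Eyw]]].
      exists (ch w), (sub r y). split. exists w. split; auto. apply Ww.
      split. apply (sub_P SWO UNB HF); auto. split.
      * intros v [Rv _]; auto.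
      * intros v [Rv Av].
        destruct (T_seq Hr _ Ry) as [ly Hly]. destruct (T_seq Hr _ Rv) as [lv Hlv].
        destruct (agree_cases SWO Hly Hlv Av) as [[E _]|[E _]].
        -- eapply K3; eauto. exists ly; auto.
        -- rewrite (extends_rs E Hlv). apply (T_rs (ch_P (proj1 Ww))); auto.
    + assert (HB : forall y, r y -> Bset lt p z y).
      { intros y Ry. fold B. destruct (classic (B y)) as [By|NBy]; auto.
        assert (Fy : Fr y).
        { destruct (classic (Fr y)); auto. exfalso. apply Hall. eauto. }
        exfalso. destruct (T_seq Hr _ Ry) as [ly Hly]. destruct (succ_ex SWO UNB ly) as [l1 [S1 S2]].
        destruct (LB SWO HF Hr Ry Hly (a := l1)) as [y' [Ry' [Ey' Hy']]]. left; auto.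
        assert (Ny : y <> y').
        { intro; subst. apply (irr SWO ly). rewrite (len_uniq SWO Hly Hy') at 2. auto. }
        destruct (classic (B y')) as [By'|NBy'].
        - apply NBy. eapply Bdown; eauto. exists ly; auto.
        - destruct (classic (Fr y')) as [Fy'|NFy'].
          + destruct (Fr_init Fy' Ey' (ex_intro _ ly Hly)) as [X|X]; auto.
          + apply Hall. eauto. }
      destruct (star SWO UNB REG HF Hp Hr HB) as [k [Rk NoBr]].
      assert (Pk : p k) by (apply q_p; auto).
      exists (ch k), (ch k). split. exists k; auto. split. apply ch_P; auto. split.
      * intros v Cv. destruct (ch_sub _ _ Cv) as [Pv Av].
        destruct (T_seq Hr _ Rk) as [lk Hlk]. destruct (p_seq Pv) as [lv Hlv].
        destruct (agree_cases SWO Hlk Hlv Av) as [[E Hle]|[E _]].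
        -- destruct (LB SWO HF Hr Rk Hlk Hle) as [y [Ry [Ey Hy]]].
           assert (Py : p y) by (apply q_p; auto).
           assert (A : agree y v) by (apply NoBr; auto).
           assert (Eyv : extends y v) by (apply (ext_of_agree SWO Hlv Hy); [apply agree_sym; auto | right; auto]).
           rewrite (extends_eq SWO Eyv Hlv Hy) in Ry. auto.
        -- rewrite (extends_rs E Hlv). apply (T_rs Hr); auto.
      * intros v Hv; auto.
Qed.

End Main.

Theorem lemma4p8 (K : Type) (lt : K -> K -> Prop) (F : (K -> Prop) -> Prop) :
  is_infinite_regular_cardinal lt ->
  kappa_lt_kappa_eq_kappa lt ->
  lt_kappa_complete_filter lt F ->
  forall (D : (sq K -> Prop) -> Prop), dense_in_P lt F D ->
  forall (p : sq K -> Prop), in_P lt F p ->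
  forall z : K,
  exists q, in_P lt F q /\ le_z lt z p q /\
    exists D' : (sq K -> Prop) -> Prop, (forall d, D' d -> D d) /\ card_le_kappa D' /\
               predense_above lt F D' q.
Proof.
  intros [SWO [[k0] [UNB [_ REG]]]] [e He] HF D HD p Hp z.
  exact (main_result SWO UNB REG HF HD Hp z e k0 He).
Qed.
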